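(* Let $A=\mathbb{Q}[X]$, $K=\mathbb{Q}(X)$, $B=A[T,Y,Z]=A^{[3]}$, and let $D\in\operatorname{LND}_A(B)$ be defined by $D(T)=0$, $D(Y)=X$, $D(Z)=Y$. Then $\operatorname{rank} D=2$, $\operatorname{rank} D_K=1$, and $D$ is not rigid: both $(T,Y,Z)$ and $(T',Y,Z)$ with $T'=T-Y^2+2XZ$ lie in $\Gamma_D(B)$, but $A[T]\neq A[T']$.
   Context: $D_K$ is the extension of $D$ to $K^{[3]}=K[T,Y,Z]$. If $B=A^{[n]}$, a coordinate system of $B$ over $A$ is an ordered $n$-tuple $(X_1,\dots,X_n)$ of elements of $B$ with $A[X_1,\dots,X_n]=B$; $\Gamma(B)$ denotes the set of all such. $\operatorname{LND}_A(B)$ is the set of locally nilpotent $A$-derivations of $B$. The rank of $D$ is the least integer $r\ge 0$ such that there is a coordinate system $(X_1,\dots,X_n)$ of $B$ over $A$ with $A[X_1,\dots,X_{n-r}]\subset\ker D$. For $D$ of rank $r$, $\Gamma_D(B)$ is the set of $(X_1,\dots,X_n)\in\Gamma(B)$ with $A[X_1,\dots,X_{n-r}]\subset \ker D$. $D$ is rigid if $A[X_1,\dots,X_{n-r}]=A[X_1',\dots,X_{n-r}']$ whenever $(X_1,\dots,X_n)$ and $(X_1',\dots,X_n')$ both belong to $\Gamma_D(B)$. *)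

(* Defs.v *)
(* B = A^[3] is modelled as the iterated polynomial ring
   {poly {poly {poly R}}}: innermost variable T, middle Y, outermost Z. *)
From HB Require Import structures.
From mathcomp Require Import all_boot all_order all_algebra fraction.
Set Implicit Arguments. Unset Strict Implicit. Unset Printing Implicit Defensive.
Import Order.TTheory GRing.Theory Num.Theory.
Local Open Scope ring_scope.

Definition B3 (R : comNzRingType) := {poly {poly {poly R}}}.

Definition c3 (R : comNzRingType) (a : R) : B3 R := a%:P%:P%:P.

Definition varT (R : comNzRingType) : B3 R := 'X%:P%:P.
Definition varY (R : comNzRingType) : B3 R := 'X%:P.
Definition varZ (R : comNzRingType) : B3 R := 'X.

Inductive gen (R : comNzRingType) (xs : seq (B3 R)) : B3 R -> Prop :=
| gen_const : forall a : R, gen xs (c3 a)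
| gen_var   : forall x, x \in xs -> gen xs x
| gen_add   : forall b1 b2, gen xs b1 -> gen xs b2 -> gen xs (b1 + b2)
| gen_mul   : forall b1 b2, gen xs b1 -> gen xs b2 -> gen xs (b1 * b2).

Definition coord_sys (R : comNzRingType) (xs : seq (B3 R)) : Prop :=
  size xs = 3%N /\ forall b : B3 R, gen xs b.

Definition is_LND (R : comNzRingType) (D : B3 R -> B3 R) : Prop :=
  [/\ forall b1 b2, D (b1 + b2) = D b1 + D b2,
      forall (a : R) b, D (c3 a * b) = c3 a * D b,
      forall b1 b2, D (b1 * b2) = b1 * D b2 + D b1 * b2
    & forall b, exists n : nat, iter n D b = 0].

Definition kills_first (R : comNzRingType) (D : B3 R -> B3 R) (r : nat)
    (xs : seq (B3 R)) : Prop :=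
  forall b, gen (take (3 - r) xs) b -> D b = 0.

(* Gamma_D(B) for r the rank of D *)
Definition in_Gamma (R : comNzRingType) (D : B3 R -> B3 R) (r : nat)
    (xs : seq (B3 R)) : Prop :=
  coord_sys xs /\ kills_first D r xs.

Definition rank_is (R : comNzRingType) (D : B3 R -> B3 R) (r : nat) : Prop :=
  (exists xs, in_Gamma D r xs) /\
  (forall r' : nat, (r' < r)%N -> ~ exists xs, in_Gamma D r' xs).

Definition rigid (R : comNzRingType) (D : B3 R -> B3 R) : Prop :=
  forall r : nat, rank_is D r ->
  forall xs xs', in_Gamma D r xs -> in_Gamma D r xs' ->
  forall b, gen (take (3 - r) xs) b <-> gen (take (3 - r) xs') b.

(* The derivation x * d/dY + Y * d/dZ on R[T,Y,Z]; it is the R-derivation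
   with D(T) = 0, D(Y) = x, D(Z) = Y. *)
Definition Dx (R : comNzRingType) (x : R) (p : B3 R) : B3 R :=
  c3 x * map_poly deriv p + varY R * deriv p.

Definition A := {poly rat}.
Definition K := {fraction {poly rat}}.

Definition D : B3 A -> B3 A := Dx ('X : A).
Definition D_K : B3 K -> B3 K := Dx (@FracField.tofrac _ ('X : {poly rat}) : K).

Definition T' : B3 A := varT A - varY A ^+ 2 + 2%:R * c3 ('X : A) * varZ A.

(* Main.v *)
Require Import Defs.
From HB Require Import structures.
From mathcomp Require Import all_boot all_order all_algebra fraction ring zify.
Import Order.TTheory GRing.Theory Num.Theory.
Local Open Scope ring_scope.
Set Implicit Arguments. Unset Strict Implicit.

Section G.
Variable R : comNzRingType.
Implicit Types p q : B3 R.

Definition Md (p : B3 R) : B3 R := map_poly deriv p.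

Lemma Md_coef p i : (Md p)`_i = deriv p`_i.
Proof. by rewrite /Md coef_map_id0 // deriv0. Qed.

Lemma MdD p q : Md (p + q) = Md p + Md q.
Proof. by apply/polyP => i; rewrite coefD !Md_coef coefD derivD. Qed.

Lemma MdM p q : Md (p * q) = p * Md q + Md p * q.
Proof.
apply/polyP => i; rewrite coefD Md_coef !coefM raddf_sum /= -big_split /=.
apply: eq_bigr => j _; rewrite derivM !Md_coef addrC //.
Qed.

Lemma MdC (b : {poly R}) : Md b%:P%:P = 0.
Proof. by rewrite /Md map_polyC /= derivC polyC0. Qed.

Definition c3' := @c3 R.
Lemma c3M (a b : R) : c3 (a * b) = c3 a * c3 b.
Proof. by rewrite /c3 !polyCM. Qed.
Lemma c3D (a b : R) : c3 (a + b) = c3 a + c3 b.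
Proof. by rewrite /c3 !polyCD. Qed.

Variable x : R.
Local Notation D := (Dx x).

Lemma DxD p q : D (p + q) = D p + D q.
Proof. rewrite /Dx -!/(Md _) MdD derivD; ring. Qed.

Lemma DxM p q : D (p * q) = p * D q + D p * q.
Proof. rewrite /Dx -!/(Md _) MdM derivM; ring. Qed.

Lemma Dxc3 a : D (c3 a) = 0.
Proof. by rewrite /Dx -!/(Md _) /c3 MdC derivC !mulr0 addr0. Qed.

Lemma DxT : D (varT R) = 0.
Proof. by rewrite /Dx /varT -!/(Md _) MdC derivC !mulr0 addr0. Qed.

Lemma DxY : D (varY R) = c3 x.
Proof.
rewrite /Dx /varY -!/(Md _) derivC mulr0 addr0.
have -> : Md 'X%:P = 1.
  apply/polyP => i; rewrite Md_coef !coefC; case: (i == 0)%N => //; by rewrite ?derivX ?deriv0.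
by rewrite mulr1.
Qed.

Lemma DxZ : D (varZ R) = varY R.
Proof.
rewrite /Dx /varZ -!/(Md _) derivX mulr1.
have -> : Md 'X = 0.
  apply/polyP => i; rewrite Md_coef coefX coef0; case: (i == 1)%N; rewrite /= ?deriv0 // -polyC1 derivC //.
by rewrite mulr0 add0r.
Qed.



Lemma gen_all (xs : seq (B3 R)) :
  gen xs (varT R) -> gen xs (varY R) -> gen xs (varZ R) -> forall b, gen xs b.
Proof.
move=> hT hY hZ.
have h1 : forall a : {poly R}, gen xs (a%:P%:P).
  elim/poly_ind => [|a c IH].
    by have := gen_const xs 0; rewrite /c3 !polyC0.
  have -> : (a * 'X + c%:P)%:P%:P = a%:P%:P * varT R + c3 c.
    by rewrite /varT /c3 !rmorphD /= !rmorphM.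
  exact: gen_add (gen_mul IH hT) (gen_const xs c).
have h2 : forall a : {poly {poly R}}, gen xs (a%:P).
  elim/poly_ind => [|a c IH].
    by have := gen_const xs 0; rewrite /c3 !polyC0.
  have -> : (a * 'X + c%:P)%:P = a%:P * varY R + c%:P%:P.
    by rewrite /varY !rmorphD /= !rmorphM.
  exact: gen_add (gen_mul IH hY) (h1 c).
elim/poly_ind => [|a c IH].
  by have := gen_const xs 0; rewrite /c3 !polyC0.
exact: gen_add (gen_mul IH hZ) (h2 c).
Qed.

Lemma gen_kill (xs : seq (B3 R)) b :
  (forall y, y \in xs -> D y = 0) -> gen xs b -> D b = 0.
Proof.
move=> hk; elim => [a|y /hk //|b1 b2 _ h1 _ h2|b1 b2 _ h1 _ h2].
- exact: Dxc3.
- by rewrite DxD h1 h2 addr0.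
- by rewrite DxM h1 h2 mulr0 mul0r addr0.
Qed.

Lemma gen_ideal (x1 x2 x3 : B3 R) b :
  D x1 = 0 -> D x2 = 0 -> gen [:: x1; x2; x3] b -> exists c, D b = D x3 * c.
Proof.
move=> h1 h2; elim => [a|y|b1 b2 _ [c1 e1] _ [c2 e2]|b1 b2 _ [c1 e1] _ [c2 e2]].
- by exists 0; rewrite Dxc3 mulr0.
- rewrite !inE => /or3P [] /eqP ->.
  + by exists 0; rewrite h1 mulr0.
  + by exists 0; rewrite h2 mulr0.
  + by exists 1; rewrite mulr1.
- by exists (c1 + c2); rewrite DxD e1 e2 mulrDr.
- by exists (b1 * c2 + c1 * b2); rewrite DxM e1 e2; ring.
Qed.

Definition Wt n (p : B3 R) := forall i j, (n <= j + 2 * i)%N -> p`_i`_j = 0.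

Lemma Wt0 p : Wt 0 p -> p = 0.
Proof. move=> h; apply/polyP => i; apply/polyP => j; rewrite !coef0; exact: h. Qed.

Lemma WtD n p : Wt n.+1 p -> Wt n (D p).
Proof.
move=> h i j hij.
rewrite /Dx -/(Md _) coefD /c3 /varY !coefCM Md_coef coefD !coefCM coef_deriv coefXM coef_deriv.
rewrite h; last by rewrite addSn ltnS.
rewrite mul0rn mulr0 add0r.
case: j hij => [|j] hij //=.
rewrite coefMn h ?mul0rn //.
by move: hij; rewrite mulnS; lia.
Qed.

Lemma Wt_ex p : exists n, Wt n p.
Proof.
exists (2 * size p + \sum_(i < size p) size (p`_i)%R)%N => i j hij.
case: (ltnP i (size p)) => hi; last by rewrite [p`_i]nth_default // coef0.
rewrite nth_default //.
have : (size (p`_i)%R <= \sum_(k < size p) size (p`_k)%R)%N.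
  by rewrite (bigD1 (Ordinal hi)) //= leq_addr.
move: hij; set S := (\sum_(_ < _) _)%N => hij hS; clearbody S; move: hS; set s := size _ => hS; clearbody s.
lia.
Qed.

Lemma Dx_nil b : exists n, iter n D b = 0.
Proof.
have [n hn] := Wt_ex b; exists n.
elim: n b hn => [|n IH] b hb; first exact: Wt0.
by rewrite iterSr; apply: IH; apply: WtD.
Qed.

Lemma Dxc3M a p : D (c3 a * p) = c3 a * D p.
Proof. rewrite DxM Dxc3; move: (c3 a) (D p) => u v; by rewrite mul0r addr0. Qed.

Lemma Dx_LND : is_LND D.
Proof.
split.
- exact: DxD.
- exact: Dxc3M.
- exact: DxM.
- exact: Dx_nil.
Qed.


Lemma c3N (a : R) : c3 (- a) = - c3 a.
Proof. by rewrite /c3 !polyCN. Qed.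
Lemma c3_nat n : c3 (n%:R : R) = n%:R.
Proof. by rewrite /c3 !polyC_natr. Qed.
Lemma c3_1 : c3 (1 : R) = 1.
Proof. exact: (c3_nat 1). Qed.

Lemma no_rank0 : x != 0 -> ~ exists xs, in_Gamma D 0 xs.
Proof.
move=> hx [xs [[hs hall] hk]].
have := hk (varY R); rewrite subn0 take_oversize ?hs // => /(_ (hall _)).
by rewrite DxY => /eqP; rewrite /c3 !polyC_eq0 (negbTE hx).
Qed.

Lemma Dw (u v : R) :
  D (varT R + c3 u * (varY R * varY R) + c3 v * (c3 x * varZ R)) =
  c3 (2%:R * u * x + v * x) * varY R.
Proof.
rewrite (DxD (varT R + _)) (DxD (varT R)) DxT.
rewrite (DxM (c3 u)) (DxM (varY R)) (DxM (c3 v)) (DxM (c3 x)) !Dxc3 DxY DxZ.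
rewrite c3D !c3M c3_nat.
move: (c3 u) (c3 v) (c3 x) (varY R) (varZ R) (varT R) => U V X Y Z T.
ring.
Qed.

Lemma coef1_gen (u v : R) :
  (varT R + c3 u * (varY R * varY R) + c3 v * varZ R)`_1 = v%:P%:P.
Proof.
rewrite coefD coefD /varT coefC /= add0r.
have -> : varY R * varY R = ('X * 'X)%:P by rewrite /varY polyCM.
rewrite /c3 coefCM coefC /= mulr0 add0r /varZ coefMX /=.
by rewrite coefC.
Qed.

Lemma c3MA (a b : R) (z : B3 R) : c3 a * (c3 b * z) = c3 (a * b) * z.
Proof. by rewrite c3M mulrA. Qed.

Lemma Zsolve (k m : R) : k * (m * x) = 1 ->
  varZ R = c3 k * ((varT R + c3 1 * (varY R * varY R) + c3 m * (c3 x * varZ R))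
                   + c3 (-1) * varT R + c3 (-1) * (varY R * varY R)).
Proof.
move=> h; rewrite c3N c3_1.
have hk : c3 k * (c3 m * c3 x) = 1 by rewrite -!c3M h c3_1.
move: hk; move: (c3 k) (c3 m) (c3 x) (varT R) (varY R) (varZ R) => K M X T Y Z hk.
transitivity (K * (M * X) * Z); first by rewrite hk mul1r.
ring.
Qed.
End G.


Lemma inv_lemma (F : fieldType) (c a : F) : c * a != 0 -> (- (c * a)^-1) * ((- c) * a) = 1.
Proof. by move=> h; rewrite mulNr mulNr mulrN opprK mulVf. Qed.

Lemma polyC_fact (S : idomainType) (p q : {poly S}) (c : S) :
  c != 0 -> p * q = c%:P -> p = (p`_0)%:P /\ q = (q`_0)%:P /\ p`_0 * q`_0 = c.
Proof.
move=> hc e.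
have hp : p != 0 by apply: contra_neq hc => hp; move: e; rewrite hp mul0r => /eqP; rewrite eq_sym polyC_eq0 => /eqP.
have hq : q != 0 by apply: contra_neq hc => hq; move: e; rewrite hq mulr0 => /eqP; rewrite eq_sym polyC_eq0 => /eqP.
have hs := size_mul hp hq; rewrite e size_polyC hc in hs.
have sp : size p = 1%N.
  move: hs; rewrite -!size_poly_gt0 in hp hq; move: hp hq; lia.
have sq : size q = 1%N.
  move: hs; rewrite -!size_poly_gt0 in hp hq; move: hp hq; lia.
have ep : p = (p`_0)%:P by apply: size1_polyC; rewrite sp.
have eq : q = (q`_0)%:P by apply: size1_polyC; rewrite sq.
split => //; split => //.
by apply: (@polyC_inj S); rewrite polyCM -ep -eq.
Qed.

Definition Xa : A := 'X.

Lemma two_X_neq0 : (2%:R * Xa : {poly rat}) != 0.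
Proof. by rewrite mulf_neq0 ?polyX_eq0 // -polyC_natr polyC_eq0. Qed.

Lemma no_rank1_D : ~ exists xs, in_Gamma D 1 xs.
Proof.
move=> [xs [[hs hall] hk]].
case: xs hs hall hk => [|x1 [|x2 [|x3 [|]]]] //= _ hall hk.
have h1 : D x1 = 0 by apply: hk; apply: gen_var; rewrite !inE eqxx.
have h2 : D x2 = 0 by apply: hk; apply: gen_var; rewrite !inE eqxx orbT.
have [c1 e1] := gen_ideal h1 h2 (hall (varY A)).
have [c2 e2] := gen_ideal h1 h2 (hall (varZ A)).
rewrite /D DxY in e1; rewrite /D DxZ in e2.
set d := Dx 'X x3 in e1 e2.
have hd : d = c3 d`_0`_0`_0.
  have nz1 : ('X%:P%:P : {poly {poly A}}) != 0 by rewrite !polyC_eq0 polyX_eq0.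
  have nz2 : ('X%:P : {poly A}) != 0 by rewrite !polyC_eq0 polyX_eq0.
  have nz3 : ('X : A) != 0 by rewrite polyX_eq0.
  have [ea [eb ec]] := polyC_fact nz1 (esym e1).
  have [ea' [eb' ec']] := polyC_fact nz2 ec.
  have [ea'' [eb'' ec'']] := polyC_fact nz3 ec'.
  by rewrite /c3 -ea'' -ea' -ea.
set a := d`_0`_0`_0 in hd.
have hu : a * c2`_0`_1`_0 = 1.
  move: e2; rewrite hd => /(congr1 (fun p : B3 A => p`_0`_1`_0)).
  by rewrite /c3 /varY !coefCM coefC /= coefX coefC.
have ha : a = 'X * (Md x3)`_0`_0`_0.
  rewrite /a /d /Dx -/(Md _) coefD /c3 /varY !coefCM coefD !coefCM coefXM /= coefD coefCM coef0 addr0.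
  done.
have : (1 : A) = 'X * ((Md x3)`_0`_0`_0 * c2`_0`_1`_0) by rewrite mulrA -ha hu.
move/(congr1 (fun p : A => p`_0)); rewrite coefXM coef1 /= => /eqP.
by rewrite oner_eq0.
Qed.

Lemma T'_eq : T' = varT A + c3 (-1) * (varY A * varY A) + c3 2%:R * (c3 'X * varZ A).
Proof. by rewrite /T' c3N c3_nat c3_1 expr2; ring. Qed.

Lemma DT' : D T' = 0.
Proof.
rewrite T'_eq /D Dw.
have -> : (2%:R * -1 * 'X + 2%:R * 'X : A) = 0 by ring.
by rewrite /c3 !polyC0 mul0r.
Qed.

Lemma Gamma1 : in_Gamma D 2 [:: varT A; varY A; varZ A].
Proof.
split.
  split => //; apply: gen_all; apply: gen_var; by rewrite !inE eqxx ?orbT.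
move=> b /= hb; apply: gen_kill hb => y; rewrite inE => /eqP ->; exact: DxT.
Qed.

Lemma Gamma2 : in_Gamma D 2 [:: T'; varY A; varZ A].
Proof.
split; last first.
  move=> b /= hb; apply: gen_kill hb => y; rewrite inE => /eqP ->; exact: DT'.
have gT : gen [:: T'; varY A; varZ A] T' by apply: gen_var; rewrite inE eqxx.
have gY : gen [:: T'; varY A; varZ A] (varY A) by apply: gen_var; rewrite !inE eqxx ?orbT.
have gZ : gen [:: T'; varY A; varZ A] (varZ A) by apply: gen_var; rewrite !inE eqxx ?orbT.
split => //; apply: gen_all => //.
have -> : varT A = T' + varY A * varY A + c3 (-1) * (c3 2%:R * (c3 'X * varZ A)).
  rewrite T'_eq c3N c3_1.
  move: (varT A) (varY A) (varZ A) (c3 2%:R) (c3 ('X : A)) => T Y Z a b; ring.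
exact: (gen_add (gen_add gT (gen_mul gY gY))
          (gen_mul (gen_const _ (-1)) (gen_mul (gen_const _ 2%:R) (gen_mul (gen_const _ 'X) gZ)))).
Qed.

Lemma genT_coef1 b : gen [:: varT A] b -> b`_1 = 0.
Proof.
elim => [a|y|b1 b2 _ h1 _ h2|b1 b2 _ h1 _ h2].
- by rewrite /c3 coefC.
- by rewrite inE => /eqP ->; rewrite /varT coefC.
- by rewrite coefD h1 h2 addr0.
- rewrite coefM big_ord_recr big_ord_recr big_ord0 /= add0r.
  by rewrite subn0 subnn h1 h2 mulr0 mul0r addr0.
Qed.

Lemma T'_eq2 : T' = varT A + c3 (-1) * (varY A * varY A) + c3 (2%:R * 'X) * varZ A.
Proof.
rewrite T'_eq; congr (_ + _); exact: c3MA.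
Qed.

Lemma T'_coef1 : T'`_1 = (2%:R * 'X)%:P%:P.
Proof. by rewrite T'_eq2 coef1_gen. Qed.

Lemma not_same : ~ (forall b, gen [:: varT A] b <-> gen [:: T'] b).
Proof.
move=> h; have g : gen [:: T'] T' by apply: gen_var; rewrite inE.
move/(proj2 (h T')): g => /genT_coef1; rewrite T'_coef1 => /eqP; rewrite !polyC_eq0.
by rewrite (negbTE two_X_neq0).
Qed.

Local Notation xK := (@FracField.tofrac _ ('X : {poly rat}) : K).
Definition wK : B3 K := varT K + c3 1 * (varY K * varY K) + c3 (-2%:R) * (c3 xK * varZ K).

Lemma DwK : D_K wK = 0.
Proof.
rewrite /D_K /wK Dw.
have -> : (2%:R * 1 * xK + -2%:R * xK : K) = 0 by ring.
by rewrite /c3 !polyC0 mul0r.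
Qed.

Lemma xK_neq0 : xK != 0.
Proof. by rewrite tofrac_eq0 polyX_eq0. Qed.

Lemma twoxK : (2%:R * xK : K) != 0.
Proof.
rewrite mulf_neq0 ?xK_neq0 //.
by rewrite -(rmorph_nat (@FracField.tofrac {poly rat}) 2) tofrac_eq0 -polyC_natr polyC_eq0.
Qed.

Lemma GammaK : in_Gamma D_K 1 [:: varT K; wK; varY K].
Proof.
split; last first.
  move=> b /= hb; apply: gen_kill hb => y; rewrite !inE => /orP [] /eqP ->; [exact: DxT | exact: DwK].
have gT : gen [:: varT K; wK; varY K] (varT K) by apply: gen_var; rewrite inE eqxx.
have gw : gen [:: varT K; wK; varY K] wK by apply: gen_var; rewrite !inE eqxx ?orbT.
have gY : gen [:: varT K; wK; varY K] (varY K) by apply: gen_var; rewrite !inE eqxx ?orbT.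
split => //; apply: gen_all => //.
rewrite (Zsolve (inv_lemma twoxK)).
exact: (gen_mul (gen_const _ _) (gen_add (gen_add gw (gen_mul (gen_const _ _) gT))
          (gen_mul (gen_const _ _) (gen_mul gY gY)))).
Qed.

Lemma rankK : rank_is D_K 1.
Proof.
split; first by exists [:: varT K; wK; varY K]; exact: GammaK.
by move=> [|r'] // _; exact: no_rank0 xK_neq0.
Qed.

Lemma rank2 : rank_is D 2.
Proof.
split; first by exists [:: varT A; varY A; varZ A]; exact: Gamma1.
move=> [|[|r']] // _.
  by apply: no_rank0; rewrite polyX_eq0.
exact: no_rank1_D.
Qed.

Lemma not_rigid : ~ rigid D.
Proof.
move=> h; apply: not_same => b; exact: (h 2%N rank2 _ _ Gamma1 Gamma2 b).
Qed.

Theorem mainTheorem3 :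
  (is_LND D /\
   D (varT A) = 0 /\ D (varY A) = c3 ('X : A) /\ D (varZ A) = varY A) /\
  rank_is D 2 /\
  rank_is D_K 1 /\
  (in_Gamma D 2 [:: varT A; varY A; varZ A] /\ in_Gamma D 2 [:: T'; varY A; varZ A]) /\
  ~ (forall b, gen [:: varT A] b <-> gen [:: T'] b) /\
  ~ rigid D.
Proof.
split; first split.
  exact: (Dx_LND ('X : A)).
  split; first exact: DxT.
  split; first exact: DxY.
  exact: DxZ.
split; first exact: rank2.
split; first exact: rankK.
split; first by split; [exact: Gamma1 | exact: Gamma2].
split; first exact: not_same.
exact: not_rigid.
Qed.
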